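(* Let $m,n\ge1$, $a\in(0,\infty)^m$, $b\in(0,\infty)^n$, and let $\Omega$ be a real $m\times n$ matrix. The operators $T_1,T_2$ map the interior of $\tilde{\mathcal A}$ into the interior of $\tilde{\mathcal A}$. Moreover, for $(A,B)$ in the interior of $\tilde{\mathcal A}$, letting $\tilde{\mathcal A}_{(-,B)}=\{(A',B)\in\tilde{\mathcal A}\}$ and $\tilde{\mathcal A}_{(A,-)}=\{(A,B')\in\tilde{\mathcal A}\}$: (1) $T_1(A,B)$ is the unique point of $\tilde{\mathcal A}_{(-,B)}$ attaining $\sup_{(A',B)\in\tilde{\mathcal A}_{(-,B)}}F(A',B)$; (2) $T_2(A,B)$ is the unique point of $\tilde{\mathcal A}_{(A,-)}$ attaining $\sup_{(A,B')\in\tilde{\mathcal A}_{(A,-)}}F(A,B')$.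
   Context: $\mathcal A$ is the set of pairs $(A,B)$ of $(m+1)\times(n+1)$ real matrices (indices $i=0,\dots,m$, $j=0,\dots,n$) with: $A_{ij},B_{ij}\ge0$; $a_i=\sum_{j=0}^nA_{ij}$ for $i=1,\dots,m$; $A_{0j}=0$ for all $j$; $b_j=\sum_{i=0}^mB_{ij}$ for $j=1,\dots,n$; $B_{i0}=0$ for all $i$. $F(A,B)=\sum_{i=1}^m\sum_{j=1}^n\sqrt{A_{ij}B_{ij}}\,\Omega_{ij}$. $\tilde{\mathcal A}\subset\mathcal A$ consists of those $(A,B)$ with: (1) $A_{ij}=B_{ij}=0$ whenever $i,j\ge1$ and $\Omega_{ij}\le0$; (2) for $j\ge1$, $B_{0j}=0$ if there is $i\ge1$ with $\Omega_{ij}>0$; (3) for $i\ge1$, $A_{i0}=0$ if there is $j\ge1$ with $\Omega_{ij}>0$. $T_1(A,B)=(E,B)$ where $E_{ij}=A_{ij}$ if $i=0$ or $j=0$, and otherwise $E_{ij}=a_iB_{ij}\Omega_{ij}^2/\sum_{k=1}^nB_{ik}\Omega_{ik}^2$ if this denominator is positive and $0$ otherwise. $T_2(A,B)=(A,E)$ where $E_{ij}=B_{ij}$ if $i=0$ or $j=0$, and otherwise $E_{ij}=b_jA_{ij}\Omega_{ij}^2/\sum_{k=1}^mA_{kj}\Omega_{kj}^2$ if this denominator is positive and $0$ otherwise. ''Interior'' refers to the interior of the convex set $\tilde{\mathcal A}$ relative to the affine space it spans. *)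

(* Defs.v *)
(* Scalars: an arbitrary real closed field R (Num.sqrt needs rcfType). *)
From HB Require Import structures.
From mathcomp Require Import all_boot all_order all_algebra.
Set Implicit Arguments. Unset Strict Implicit. Unset Printing Implicit Defensive.
Import Order.TTheory GRing.Theory Num.Theory.
Local Open Scope ring_scope.

Section Defs.
Variables (R : rcfType) (m n : nat).

(* Pairs (A,B) of (m+1)x(n+1) matrices; row/column index 0 is ord0,
   index i >= 1 is  lift ord0 i'  with i' : 'I_m (paper's i = i'+1). *)
Definition mxpair := ('M[R]_(m.+1, n.+1) * 'M[R]_(m.+1, n.+1))%type.

Definition ri (i : 'I_m) : 'I_m.+1 := lift ord0 i.
Definition cj (j : 'I_n) : 'I_n.+1 := lift ord0 j.

Definition inA (a : 'I_m -> R) (b : 'I_n -> R) (P : mxpair) : Prop :=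
  let A := P.1 in let B := P.2 in
  [/\ (forall i j, 0 <= A i j /\ 0 <= B i j),
      (forall i : 'I_m, a i = \sum_(j < n.+1) A (ri i) j),
      (forall j, A ord0 j = 0),
      (forall j : 'I_n, b j = \sum_(i < m.+1) B i (cj j)) &
      (forall i, B i ord0 = 0)].

Definition inAt (a : 'I_m -> R) (b : 'I_n -> R) (Om : 'M[R]_(m, n))
    (P : mxpair) : Prop :=
  let A := P.1 in let B := P.2 in
  [/\ inA a b P,
      (forall i j, Om i j <= 0 -> A (ri i) (cj j) = 0 /\ B (ri i) (cj j) = 0),
      (forall j, (exists i, 0 < Om i j) -> B ord0 (cj j) = 0) &
      (forall i, (exists j, 0 < Om i j) -> A (ri i) ord0 = 0)].

Definition Fobj (Om : 'M[R]_(m, n)) (P : mxpair) : R :=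
  \sum_(i < m) \sum_(j < n) Num.sqrt (P.1 (ri i) (cj j) * P.2 (ri i) (cj j)) * Om i j.

Definition T1 (a : 'I_m -> R) (Om : 'M[R]_(m, n)) (P : mxpair) : mxpair :=
  let A := P.1 in let B := P.2 in
  (\matrix_(i < m.+1, j < n.+1)
     match unlift ord0 i, unlift ord0 j with
     | Some i', Some j' =>
         let d := \sum_(k < n) B i (cj k) * Om i' k ^+ 2 in
         if 0 < d then a i' * B i j * Om i' j' ^+ 2 / d else 0
     | _, _ => A i j
     end, B).

Definition T2 (b : 'I_n -> R) (Om : 'M[R]_(m, n)) (P : mxpair) : mxpair :=
  let A := P.1 in let B := P.2 in
  (A, \matrix_(i < m.+1, j < n.+1)
     match unlift ord0 i, unlift ord0 j with
     | Some i', Some j' =>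
         let d := \sum_(k < m) A (ri k) j * Om k j' ^+ 2 in
         if 0 < d then b j' * A i j * Om i' j' ^+ 2 / d else 0
     | _, _ => B i j
     end).

Definition affhull (S : mxpair -> Prop) (Y : mxpair) : Prop :=
  exists (k : nat) (p : 'I_k -> mxpair) (w : 'I_k -> R),
    [/\ (forall l, S (p l)), \sum_(l < k) w l = 1,
        Y.1 = \sum_(l < k) w l *: (p l).1 &
        Y.2 = \sum_(l < k) w l *: (p l).2].

Definition relint (S : mxpair -> Prop) (X : mxpair) : Prop :=
  S X /\ exists eps : R, 0 < eps /\
    forall Y, affhull S Y ->
      (forall i j, `|Y.1 i j - X.1 i j| < eps /\ `|Y.2 i j - X.2 i j| < eps) ->
      S Y.

Definition unique_argmax (S : mxpair -> Prop) (f : mxpair -> R) (X : mxpair) : Prop :=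
  [/\ S X, (forall Y, S Y -> f Y <= f X) & (forall Y, S Y -> f X <= f Y -> Y = X)].

End Defs.

(* Main.v *)
Require Import Defs.
From HB Require Import structures.
From mathcomp Require Import all_boot all_order all_algebra.
From mathcomp Require Import ring lra.
Set Implicit Arguments. Unset Strict Implicit. Unset Printing Implicit Defensive.
Import Order.TTheory GRing.Theory Num.Theory.
Local Open Scope ring_scope.

Lemma alg_id (R : fieldType) (s q c : R) : c != 0 -> (2 : R) != 0 ->
  s * q + (s - c * q) ^+ 2 / (2 * c) = c * q ^+ 2 - c ^+ 2 * q ^+ 2 / (2 * c) + s ^+ 2 / (2 * c).
Proof. move=> hc h2. field. by rewrite h2 hc. Qed.

Section Core.
Variables (R : rcfType) (I J : finType) (a : I -> R) (y w : I -> J -> R).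
Hypothesis ha : forall i, 0 < a i.
Hypothesis hy : forall i j, 0 <= y i j.
Hypothesis hyw : forall i j, w i j <= 0 -> y i j = 0.

Definition dc i := \sum_j y i j * w i j ^+ 2.
Definition Ec i j := if 0 < dc i then a i * y i j * w i j ^+ 2 / dc i else 0.

Lemma dc_ge0 i : 0 <= dc i.
Proof. by apply: sumr_ge0 => j _; rewrite mulr_ge0 ?sqr_ge0. Qed.

Lemma Ec_ge0 i j : 0 <= Ec i j.
Proof.
rewrite /Ec; case: ifP => // hd.
apply: divr_ge0; last exact: ltW. by rewrite mulr_ge0 ?sqr_ge0 // mulr_ge0 // ltW.
Qed.

Lemma Ec_zero i j : w i j <= 0 -> Ec i j = 0.
Proof. by move=> h; rewrite /Ec hyw // !(mulr0, mul0r) if_same. Qed.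

Lemma dc_pos i j : 0 < w i j -> 0 < y i j -> 0 < dc i.
Proof.
move=> hw hyp; rewrite /dc (bigD1 j) //=.
have h1 : 0 < y i j * w i j ^+ 2 by rewrite mulr_gt0 // exprn_gt0.
have h2 : 0 <= \sum_(k | k != j) y i k * w i k ^+ 2.
  by apply: sumr_ge0 => k _; rewrite mulr_ge0 ?sqr_ge0.
lra.
Qed.

Lemma Ec_pos i j : 0 < w i j -> 0 < y i j -> 0 < Ec i j.
Proof.
move=> hw hyp; have hd := dc_pos hw hyp.
by rewrite /Ec hd divr_gt0 // !mulr_gt0 // exprn_gt0.
Qed.

Lemma Ec_sum i : (forall j, 0 < w i j -> 0 < y i j) ->
  \sum_j Ec i j = if [exists j, 0 < w i j] then a i else 0.
Proof.
move=> hp; case: ifP => [/existsP [j hj]| /negbT hn].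
  have hd := dc_pos hj (hp j hj).
  transitivity (\sum_j (a i * (y i j * w i j ^+ 2)) / dc i).
    by apply: eq_bigr => k _; rewrite /Ec hd mulrA.
  by rewrite -mulr_suml -mulr_sumr -/(dc i) mulfK // lt0r_neq0.
apply: big1 => j _; apply: Ec_zero.
move/existsPn: hn => /(_ j); by rewrite leNgt.
Qed.

Variable x : I -> J -> R.
Hypothesis hx : forall i j, 0 <= x i j.
Hypothesis hsum : forall i, \sum_j x i j = \sum_j Ec i j.

Definition cc i := if 0 < dc i then Num.sqrt (a i / dc i) else 1.
Definition qq i j := Num.sqrt (y i j) * w i j.

Lemma cc_pos i : 0 < cc i.
Proof. by rewrite /cc; case: ifP => // hd; rewrite sqrtr_gt0 divr_gt0. Qed.

Lemma qq_ge0 i j : 0 <= qq i j.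
Proof.
rewrite /qq; case: (leP (w i j) 0) => h.
  by rewrite hyw // sqrtr0 mul0r.
by rewrite mulr_ge0 ?sqrtr_ge0 ?ltW.
Qed.

Lemma Ec_sq i j : Ec i j = (cc i * qq i j) ^+ 2.
Proof.
rewrite /Ec /cc /qq; case: ifP => hd.
  rewrite !exprMn !sqr_sqrtr ?divr_ge0 ?(ltW hd) ?(ltW (ha i)) //. ring.
have hd0 : dc i = 0 by apply/le_anti; rewrite dc_ge0 andbT leNgt hd.
have := psumr_eq0P (fun k _ => mulr_ge0 (hy i k) (sqr_ge0 (w i k))) hd0 => /(_ j isT).
by rewrite mul1r exprMn sqr_sqrtr // => ->.
Qed.

Lemma sqrtE i j : Num.sqrt (Ec i j) = cc i * qq i j.
Proof. by rewrite Ec_sq sqrtr_sqr ger0_norm // mulr_ge0 ?qq_ge0 ?ltW ?cc_pos. Qed.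

Lemma termE i j : Num.sqrt (Ec i j * y i j) * w i j = cc i * qq i j ^+ 2.
Proof. by rewrite sqrtrM ?Ec_ge0 // -mulrA -/(qq i j) sqrtE -mulrA -expr2. Qed.

Lemma termQ i j : Num.sqrt (x i j * y i j) * w i j = Num.sqrt (x i j) * qq i j.
Proof. by rewrite sqrtrM // -mulrA. Qed.

Definition G i j z := cc i * qq i j ^+ 2 - cc i ^+ 2 * qq i j ^+ 2 / (2 * cc i) + z / (2 * cc i).
Definition Dq i j := (Num.sqrt (x i j) - cc i * qq i j) ^+ 2 / (2 * cc i).

Lemma two_neq0 : (2 : R) != 0. Proof. by rewrite pnatr_eq0. Qed.

Lemma decomp i j : Num.sqrt (x i j) * qq i j + Dq i j = G i j (x i j).
Proof. by rewrite /Dq /G alg_id ?two_neq0 ?lt0r_neq0 ?cc_pos // sqr_sqrtr. Qed.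

Lemma decompE i j : cc i * qq i j ^+ 2 = G i j (Ec i j).
Proof. rewrite /G Ec_sq; ring. Qed.

Lemma Gsum i : \sum_j G i j (x i j) = \sum_j G i j (Ec i j).
Proof.
rewrite /G !big_split /=; congr (_ + _).
by rewrite -!mulr_suml hsum.
Qed.

Lemma Dq_ge0 i j : 0 <= Dq i j.
Proof. by rewrite /Dq divr_ge0 ?sqr_ge0 // mulr_ge0 ?ler0n // ltW ?cc_pos. Qed.

Lemma FE_eq : \sum_i \sum_j Num.sqrt (Ec i j * y i j) * w i j =
  \sum_i \sum_j Num.sqrt (x i j * y i j) * w i j + \sum_i \sum_j Dq i j.
Proof.
transitivity (\sum_i \sum_j G i j (Ec i j)).
  by apply: eq_bigr => i _; apply: eq_bigr => j _; rewrite termE decompE.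
rewrite -big_split /=; apply: eq_bigr => i _; rewrite -Gsum -big_split /=.
by apply: eq_bigr => j _; rewrite termQ decomp.
Qed.

Lemma core_le : \sum_i \sum_j Num.sqrt (x i j * y i j) * w i j <=
  \sum_i \sum_j Num.sqrt (Ec i j * y i j) * w i j.
Proof.
by rewrite FE_eq lerDl; apply: sumr_ge0 => i _; apply: sumr_ge0 => j _; apply: Dq_ge0.
Qed.

Lemma core_eq : \sum_i \sum_j Num.sqrt (Ec i j * y i j) * w i j <=
  \sum_i \sum_j Num.sqrt (x i j * y i j) * w i j -> forall i j, x i j = Ec i j.
Proof.
rewrite FE_eq gerDl => hle i j.
have hin : forall i, 0 <= \sum_j Dq i j by move=> k; apply: sumr_ge0 => l _; apply: Dq_ge0.
have h0 : \sum_i \sum_j Dq i j = 0 by apply/le_anti; rewrite hle sumr_ge0.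
have := psumr_eq0P (fun k _ => hin k) h0 => /(_ i isT) h1.
have := psumr_eq0P (fun k _ => Dq_ge0 i k) h1 => /(_ j isT).
rewrite /Dq => /eqP; rewrite mulf_eq0 invr_eq0 mulf_eq0 orbb mulf_eq0 (negbTE two_neq0).
rewrite (negbTE (lt0r_neq0 (cc_pos i))) /= orbF subr_eq0 => /eqP hs.
by rewrite -(sqr_sqrtr (hx i j)) hs -Ec_sq.
Qed.
End Core.
Section Main.
Variables (R : rcfType) (m n : nat) (a : 'I_m -> R) (b : 'I_n -> R) (Om : 'M[R]_(m, n)).
Hypothesis ha : forall i, 0 < a i.
Hypothesis hb : forall j, 0 < b j.

Definition okA (A : 'M[R]_(m.+1, n.+1)) : Prop :=
  [/\ (forall i j, 0 <= A i j), (forall i : 'I_m, a i = \sum_(j < n.+1) A (ri i) j),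
      (forall j, A ord0 j = 0), (forall i j, Om i j <= 0 -> A (ri i) (cj j) = 0) &
      (forall i, (exists j, 0 < Om i j) -> A (ri i) ord0 = 0)].
Definition okB (B : 'M[R]_(m.+1, n.+1)) : Prop :=
  [/\ (forall i j, 0 <= B i j), (forall j : 'I_n, b j = \sum_(i < m.+1) B i (cj j)),
      (forall i, B i ord0 = 0), (forall i j, Om i j <= 0 -> B (ri i) (cj j) = 0) &
      (forall j, (exists i, 0 < Om i j) -> B ord0 (cj j) = 0)].
Definition posA (A : 'M[R]_(m.+1, n.+1)) := forall i j, 0 < Om i j -> 0 < A (ri i) (cj j).
Definition posB (B : 'M[R]_(m.+1, n.+1)) := forall i j, 0 < Om i j -> 0 < B (ri i) (cj j).
Definition intA (B : 'M[R]_(m.+1, n.+1)) := forall i j,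
  [/\ 0 <= B (ri i) (cj j), (Om i j <= 0 -> B (ri i) (cj j) = 0) & (0 < Om i j -> 0 < B (ri i) (cj j))].
Definition good (P : mxpair R m n) := [/\ okA P.1, okB P.2, posA P.1 & posB P.2].

Lemma inAt_ok P : inAt a b Om P <-> okA P.1 /\ okB P.2.
Proof.
split.
  case=> [[hnn hr h0 hc h0'] hz hC hR]; split; split => //.
  all: try first [by move=> i j; case: (hnn i j) | by move=> i j h; case: (hz i j h)].
case=> [[hnn hr h0 hz hR] [hnn' hc h0' hz' hC]]; split => //.
by move=> i j h; split; [apply: hz | apply: hz'].
Qed.

Lemma int_of B : okB B -> posB B -> intA B.
Proof. by case=> hnn _ _ hz _ hp i j; split => //; [apply: hz | apply: hp]. Qed.
Lemma int_ofA A : okA A -> posA A -> intA A.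
Proof. by case=> hnn _ _ hz _ hp i j; split => //; [apply: hz | apply: hp]. Qed.

Lemma okA_bd A : okA A -> forall i, A (ri i) ord0 = if [exists j, 0 < Om i j] then 0 else a i.
Proof.
case=> hnn hr _ hz hR i; case: ifP => [/existsP [j hj] | /negbT /existsPn hn].
  by apply: hR; exists j.
rewrite hr big_ord_recl big1 ?addr0 // => j _; apply: hz; by rewrite leNgt hn.
Qed.

Lemma okB_bd B : okB B -> forall j, B ord0 (cj j) = if [exists i, 0 < Om i j] then 0 else b j.
Proof.
case=> hnn hc _ hz hC j; case: ifP => [/existsP [i hi] | /negbT /existsPn hn].
  by apply: hC; exists i.
rewrite hc big_ord_recl big1 ?addr0 // => i _; apply: hz; by rewrite leNgt hn.
Qed.

Lemma okA_rowsum A1 A2 : okA A1 -> okA A2 -> forall i,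
  \sum_j A1 (ri i) (cj j) = \sum_j A2 (ri i) (cj j).
Proof.
move=> h1 h2 i; have e1 := okA_bd h1 i; have e2 := okA_bd h2 i.
case: h1 => _ hr1 _ _ _; case: h2 => _ hr2 _ _ _.
have := hr1 i; have := hr2 i; rewrite !big_ord_recl e1 e2 => H2 H1.
by apply: (@addrI _ (if [exists j, 0 < Om i j] then 0 else a i)); rewrite -H1 -H2.
Qed.

Lemma okB_colsum B1 B2 : okB B1 -> okB B2 -> forall j,
  \sum_i B1 (ri i) (cj j) = \sum_i B2 (ri i) (cj j).
Proof.
move=> h1 h2 j; have e1 := okB_bd h1 j; have e2 := okB_bd h2 j.
case: h1 => _ hr1 _ _ _; case: h2 => _ hr2 _ _ _.
have := hr1 j; have := hr2 j; rewrite !big_ord_recl e1 e2 => H2 H1.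
by apply: (@addrI _ (if [exists i, 0 < Om i j] then 0 else b j)); rewrite -H1 -H2.
Qed.

Lemma T1_in P i j : (T1 a Om P).1 (ri i) (cj j) =
  Ec a (fun i j => P.2 (ri i) (cj j)) (fun i j => Om i j) i j.
Proof. by rewrite /= mxE /ri /cj !liftK. Qed.
Lemma T1_bd0 P j : (T1 a Om P).1 ord0 j = P.1 ord0 j.
Proof. by rewrite /= mxE unlift_none. Qed.
Lemma T1_bd1 P i : (T1 a Om P).1 i ord0 = P.1 i ord0.
Proof. by rewrite /= mxE unlift_none; case: unlift. Qed.

Lemma T2_in P i j : (T2 b Om P).2 (ri i) (cj j) =
  Ec b (fun j i => P.1 (ri i) (cj j)) (fun j i => Om i j) j i.
Proof. by rewrite /= mxE /ri /cj !liftK. Qed.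
Lemma T2_bd0 P j : (T2 b Om P).2 ord0 j = P.2 ord0 j.
Proof. by rewrite /= mxE unlift_none. Qed.
Lemma T2_bd1 P i : (T2 b Om P).2 i ord0 = P.2 i ord0.
Proof. by rewrite /= mxE unlift_none; case: unlift. Qed.

Lemma T1_ok P : okA P.1 -> intA P.2 -> okA (T1 a Om P).1 /\ posA (T1 a Om P).1.
Proof.
move=> hA hB.
have hy : forall i j, 0 <= P.2 (ri i) (cj j) by move=> i j; case: (hB i j).
have hyw : forall i j, Om i j <= 0 -> P.2 (ri i) (cj j) = 0 by move=> i j; case: (hB i j).
have hp : forall i j, 0 < Om i j -> 0 < P.2 (ri i) (cj j) by move=> i j; case: (hB i j).
have bd := okA_bd hA; case: hA => hnn hr h0 hz hR.
split; [split|].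
- move=> i j; case: (unliftP ord0 i) => [i'|] ->.
    case: (unliftP ord0 j) => [j'|] ->; last by rewrite T1_bd1.
    rewrite T1_in; exact: Ec_ge0.
  by rewrite T1_bd0.
- move=> i; rewrite big_ord_recl T1_bd1.
  under eq_bigr => j _ do rewrite T1_in.
  rewrite (Ec_sum a hy hyw) ?bd; last by move=> j; apply: hp.
  by case: ifP; rewrite ?add0r ?addr0.
- by move=> j; rewrite T1_bd0.
- by move=> i j h; rewrite T1_in; apply: Ec_zero.
- by move=> i h; rewrite T1_bd1; apply: hR.
- by move=> i j h; rewrite T1_in; apply: Ec_pos => //=; apply: hp.
Qed.

Lemma T2_ok P : okB P.2 -> intA P.1 -> okB (T2 b Om P).2 /\ posB (T2 b Om P).2.
Proof.
move=> hB hA.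
have hy : forall j i, 0 <= P.1 (ri i) (cj j) by move=> j i; case: (hA i j).
have hyw : forall j i, Om i j <= 0 -> P.1 (ri i) (cj j) = 0 by move=> j i; case: (hA i j).
have hp : forall j i, 0 < Om i j -> 0 < P.1 (ri i) (cj j) by move=> j i; case: (hA i j).
have bd := okB_bd hB; case: hB => hnn hc h0 hz hC.
split; [split|].
- move=> i j; case: (unliftP ord0 j) => [j'|] ->.
    case: (unliftP ord0 i) => [i'|] ->; last by rewrite T2_bd0.
    rewrite T2_in; exact: Ec_ge0.
  by rewrite T2_bd1.
- move=> j; rewrite big_ord_recl T2_bd0.
  under eq_bigr => i _ do rewrite T2_in.
  rewrite (Ec_sum b hy hyw) ?bd; last by move=> i; apply: hp.
  by case: ifP; rewrite ?add0r ?addr0.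
- by move=> i; rewrite T2_bd1.
- by move=> i j h; rewrite T2_in; apply: Ec_zero.
- by move=> j h; rewrite T2_bd0; apply: hC.
- by move=> i j h; rewrite T2_in; apply: Ec_pos => //=; apply: hp.
Qed.

Lemma good_T1 P : good P -> good (T1 a Om P).
Proof.
case=> hA hB pA pB; have [h1 h2] := T1_ok hA (int_of hB pB); by split.
Qed.

Lemma good_T2 P : good P -> good (T2 b Om P).
Proof.
case=> hA hB pA pB; have [h1 h2] := T2_ok hB (int_ofA hA pA); by split.
Qed.

Lemma hull_lin Y : affhull (inAt a b Om) Y ->
 [/\ (forall i, a i = \sum_(j < n.+1) Y.1 (ri i) j), (forall j, Y.1 ord0 j = 0),
     (forall j, b j = \sum_(i < m.+1) Y.2 i (cj j)), (forall i, Y.2 i ord0 = 0) &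
     [/\ (forall i j, Om i j <= 0 -> Y.1 (ri i) (cj j) = 0 /\ Y.2 (ri i) (cj j) = 0),
         (forall j, (exists i, 0 < Om i j) -> Y.2 ord0 (cj j) = 0) &
         (forall i, (exists j, 0 < Om i j) -> Y.1 (ri i) ord0 = 0)]].
Proof.
case=> k [p [w [hp hw E1 E2]]].
have e1 : forall i j, Y.1 i j = \sum_l w l * (p l).1 i j.
  by move=> i j; rewrite E1 summxE; apply: eq_bigr => l _; rewrite mxE.
have e2 : forall i j, Y.2 i j = \sum_l w l * (p l).2 i j.
  by move=> i j; rewrite E2 summxE; apply: eq_bigr => l _; rewrite mxE.
have z : forall (f : 'I_k -> R), (forall l, f l = 0) -> \sum_l w l * f l = 0.
  by move=> f hf; apply: big1 => l _; rewrite hf mulr0.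
have c : forall (c0 : R) (N : nat) (F : 'I_k -> 'I_N -> R),
    (forall l, \sum_j F l j = c0) -> \sum_j \sum_l w l * F l j = c0.
  move=> c0 N F hF; rewrite exchange_big /=.
  under eq_bigr => l _ do rewrite -mulr_sumr hF.
  by rewrite -mulr_suml hw mul1r.
have hpi : forall l, okA (p l).1 /\ okB (p l).2 by move=> l; apply/inAt_ok.
split; [| | | | split].
- move=> i; under eq_bigr => j _ do rewrite e1.
  symmetry; apply: (c (a i) _ (fun l j => (p l).1 (ri i) j)) => l.
  by case: (hpi l) => [[_ hr _ _ _] _]; rewrite -hr.
- by move=> j; rewrite e1; apply: z => l; case: (hpi l) => [[_ _ h0 _ _] _].
- move=> j; under eq_bigr => i _ do rewrite e2.
  symmetry; apply: (c (b j) _ (fun l i => (p l).2 i (cj j))) => l.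
  by case: (hpi l) => [_ [_ hr _ _ _]]; rewrite -hr.
- by move=> i; rewrite e2; apply: z => l; case: (hpi l) => [_ [_ _ h0 _ _]].
- move=> i j h; rewrite e1 e2; split; apply: z => l.
    by case: (hpi l) => [[_ _ _ hz _] _]; apply: hz.
  by case: (hpi l) => [_ [_ _ _ hz _]]; apply: hz.
- by move=> j h; rewrite e2; apply: z => l; case: (hpi l) => [_ [_ _ _ _ hC]]; apply: hC.
- by move=> i h; rewrite e1; apply: z => l; case: (hpi l) => [[_ _ _ _ hR] _]; apply: hR.
Qed.

Lemma hull_inAt Y : affhull (inAt a b Om) Y ->
  (forall i j, 0 <= Y.1 i j /\ 0 <= Y.2 i j) -> inAt a b Om Y.
Proof.
move=> hY hnn; case: (hull_lin hY) => hr h0 hc h0' [hz hC hR].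
by split => //; split.
Qed.

Lemma fin_lb (T : finType) (f : T -> R) : (forall t, 0 < f t) ->
  exists e, 0 < e /\ forall t, e <= f t.
Proof.
move=> hf; exists (\big[Num.min/1]_t f t); split.
  apply: (big_ind (fun x : R => 0 < x)); first exact: ltr01.
    by move=> x y hx hy; rewrite lt_min hx hy.
  by move=> t _; apply: hf.
by move=> t; rewrite (bigD1 t) //= ge_min lexx.
Qed.

Lemma good_relint P : good P -> relint (inAt a b Om) P.
Proof.
move=> g; case: g => hA hB pA pB.
split; first by apply/inAt_ok.
pose pe (x : R) := if 0 < x then x else 1.
have hpe : forall x, 0 < pe x.
  by move=> x; rewrite /pe; case: ifP => // _; exact: ltr01.
have [e [he hle]] := @fin_lb _ (fun t : 'I_m.+1 * 'I_n.+1 =>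
   Num.min (pe (P.1 t.1 t.2)) (pe (P.2 t.1 t.2))) (fun t => ltac:(by rewrite lt_min !hpe)).
have nr1 : forall i j yv, 0 < P.1 i j -> `|yv - P.1 i j| < e -> 0 <= yv.
  move=> i j yv hx hd; have := hle (i, j); rewrite le_min => /andP [h1 _].
  rewrite /pe /= hx in h1; move: hd; rewrite ltr_distl => /andP [h _]; lra.
have nr2 : forall i j yv, 0 < P.2 i j -> `|yv - P.2 i j| < e -> 0 <= yv.
  move=> i j yv hx hd; have := hle (i, j); rewrite le_min => /andP [_ h1].
  rewrite /pe /= hx in h1; move: hd; rewrite ltr_distl => /andP [h _]; lra.
have bdA := okA_bd hA; have bdB := okB_bd hB.
exists e; split => // Y hY hd; apply: hull_inAt => // i j.
case: (hull_lin hY) => hr h0 hc h0' [hz hC hR].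
split.
- case: (unliftP ord0 i) => [i'|] ->; last by rewrite h0.
  case: (unliftP ord0 j) => [j'|] ->.
    case: (leP (Om i' j') 0) => hO; first by rewrite (hz i' j' hO).1.
    by apply: (nr1 _ _ _ (pA i' j' hO)); case: (hd (ri i') (cj j')).
  case hE: [exists j, 0 < Om i' j].
    by rewrite (hR i') //; case/existsP: hE => j0 hj0; exists j0.
  apply: (nr1 (ri i') ord0); last by case: (hd (ri i') ord0).
  by rewrite bdA hE.
- case: (unliftP ord0 j) => [j'|] ->; last by rewrite h0'.
  case: (unliftP ord0 i) => [i'|] ->.
    case: (leP (Om i' j') 0) => hO; first by rewrite (hz i' j' hO).2.
    by apply: (nr2 _ _ _ (pB i' j' hO)); case: (hd (ri i') (cj j')).
  case hE: [exists i, 0 < Om i j'].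
    by rewrite (hC j') //; case/existsP: hE => i0 hi0; exists i0.
  apply: (nr2 ord0 (cj j')); last by case: (hd ord0 (cj j')).
  by rewrite bdB hE.
Qed.

Lemma perturb P Q : relint (inAt a b Om) P -> inAt a b Om Q -> exists s : R, 0 < s /\
  inAt a b Om ((1 + s) *: P.1 - s *: Q.1, (1 + s) *: P.2 - s *: Q.2).
Proof.
case=> hP [e [he hN]] hQ.
pose M := \sum_i \sum_j (`|P.1 i j - Q.1 i j| + `|P.2 i j - Q.2 i j|).
have hMt : forall i j, `|P.1 i j - Q.1 i j| + `|P.2 i j - Q.2 i j| <= M.
  move=> i j; rewrite /M (bigD1 i) //= (bigD1 j) //=.
  have h1 : 0 <= \sum_(j' | j' != j) (`|P.1 i j' - Q.1 i j'| + `|P.2 i j' - Q.2 i j'|).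
    by apply: sumr_ge0 => k _; rewrite addr_ge0.
  have h2 : 0 <= \sum_(i' | i' != i) \sum_j (`|P.1 i' j - Q.1 i' j| + `|P.2 i' j - Q.2 i' j|).
    by apply: sumr_ge0 => k _; apply: sumr_ge0 => l _; rewrite addr_ge0.
  lra.
have hM : 0 <= M.
  by apply: sumr_ge0 => k _; apply: sumr_ge0 => l _; rewrite addr_ge0.
have hM1 : 0 < 1 + M by lra.
pose s := e / (1 + M).
have hs : 0 < s by rewrite /s divr_gt0.
have hsM : s * (1 + M) = e by rewrite /s mulfVK // lt0r_neq0.
have key : forall p q t, `|p - q| <= t -> t <= M -> `|(1 + s) * p + - (s * q) - p| < e.
  move=> p q t h1 h2.
  have -> : (1 + s) * p + - (s * q) - p = s * (p - q) by ring.
  rewrite normrM gtr0_norm //.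
  have h3 : s * `|p - q| <= s * M by rewrite ler_pM2l //; lra.
  rewrite mulrDr mulr1 in hsM; lra.
exists s; split => //; apply: hN.
  exists 2%N, (fun l : 'I_2 => if val l == 0%N then P else Q),
    (fun l : 'I_2 => if val l == 0%N then 1 + s else - s).
  split.
  - by move=> l; case: ifP.
  - by rewrite big_ord_recl big_ord1 /= addrK.
  - by rewrite big_ord_recl big_ord1 /= scaleNr.
  - by rewrite big_ord_recl big_ord1 /= scaleNr.
move=> i j; rewrite /= !mxE; have := hMt i j.
have := normr_ge0 (P.1 i j - Q.1 i j); have := normr_ge0 (P.2 i j - Q.2 i j) => n1 n2 h.
split; apply: (key _ _ _ _ h); lra.
Qed.

Lemma exists_good P : inAt a b Om P -> exists Q, good Q.
Proof.
move=> hP.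
pose Pos : 'M[R]_(m.+1, n.+1) := \matrix_(i, j) match unlift ord0 i, unlift ord0 j with
   | Some i', Some j' => if 0 < Om i' j' then 1 else 0 | _, _ => 0 end.
have hPos : intA Pos.
  move=> i j; rewrite mxE /ri /cj !liftK; case: ifP => h; split => //.
  all: try exact: ler01; try exact: ltr01; try (by move=> h'; move: h; rewrite ltNge h').
have [hA hB] := (inAt_ok P).1 hP.
have [h1 h2] := T1_ok (P := (P.1, Pos)) hA hPos.
have [h3 h4] := T2_ok (P := (Pos, P.2)) hB hPos.
by exists ((T1 a Om (P.1, Pos)).1, (T2 b Om (Pos, P.2)).2); split.
Qed.

Lemma relint_good P : relint (inAt a b Om) P -> good P.
Proof.
move=> hR; have hP := hR.1; have [hA hB] := (inAt_ok P).1 hP.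
have [Q [qA qB pQA pQB]] := exists_good hP.
have hQ : inAt a b Om Q by apply/inAt_ok.
have [s [hs hY]] := perturb hR hQ.
have [[hYA _ _ _ _] [hYB _ _ _ _]] := (inAt_ok _).1 hY.
have hs1 : 0 < 1 + s by lra.
have key : forall p q, 0 < q -> 0 <= (1 + s) * p + - (s * q) -> 0 < p.
  move=> p q hq h; have hsq : 0 < s * q by rewrite mulr_gt0.
  rewrite -(pmulr_rgt0 _ hs1); lra.
split => // i j hO.
- by apply: (key _ _ (pQA i j hO)); have := hYA (ri i) (cj j); rewrite /= !mxE.
- by apply: (key _ _ (pQB i j hO)); have := hYB (ri i) (cj j); rewrite /= !mxE.
Qed.

Lemma argmax1 P : good P ->
  unique_argmax (fun Q => inAt a b Om Q /\ Q.2 = P.2) (Fobj Om) (T1 a Om P).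
Proof.
move=> g; have gT := good_T1 g; case: g => hA hB pA pB; case: gT => tA tB _ _.
pose y : 'I_m -> 'I_n -> R := fun i j => P.2 (ri i) (cj j).
pose w : 'I_m -> 'I_n -> R := fun i j => Om i j.
have hy : forall i j, 0 <= y i j by case: hB => hnn _ _ _ _ i j; apply: hnn.
have hyw : forall i j, w i j <= 0 -> y i j = 0 by case: hB => _ _ _ hz _ i j; apply: hz.
have FT : Fobj Om (T1 a Om P) =
    \sum_i \sum_j Num.sqrt (Ec a y w i j * y i j) * w i j.
  by apply: eq_bigr => i _; apply: eq_bigr => j _; rewrite T1_in.
have hsumQ : forall Q : mxpair R m n, okA Q.1 -> forall i,
    \sum_j Q.1 (ri i) (cj j) = \sum_j Ec a y w i j.
  by move=> Q qA i; rewrite (okA_rowsum qA tA); apply: eq_bigr => j _; rewrite T1_in.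
split.
- by split => //; apply/inAt_ok.
- move=> Q [hQ hQ2]; have [qA _] := (inAt_ok Q).1 hQ.
  rewrite FT /Fobj hQ2.
  apply: (core_le ha hy hyw (x := fun i j => Q.1 (ri i) (cj j))).
    by case: qA => hnn _ _ _ _ i j; apply: hnn.
  exact: hsumQ.
- move=> Q [hQ hQ2] hle; have [qA _] := (inAt_ok Q).1 hQ.
  rewrite FT /Fobj hQ2 in hle.
  have hx := core_eq ha hy hyw (x := fun i j => Q.1 (ri i) (cj j))
    (ltac:(by case: qA => hnn _ _ _ _ i j; apply: hnn)) (hsumQ Q qA) hle.
  have hQ1 : Q.1 = (T1 a Om P).1.
    apply/matrixP => i j.
    case: (unliftP ord0 i) => [i'|] ->; last first.
      by rewrite T1_bd0; case: qA => _ _ -> _ _; case: hA => _ _ -> _ _.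
    case: (unliftP ord0 j) => [j'|] ->; first by rewrite T1_in; apply: hx.
    by rewrite T1_bd1 (okA_bd qA) (okA_bd hA).
  by case: Q hQ hQ2 hle hx qA hQ1 => Q1 Q2 /= _ -> _ _ _ ->.
Qed.

Lemma argmax2 P : good P ->
  unique_argmax (fun Q => inAt a b Om Q /\ Q.1 = P.1) (Fobj Om) (T2 b Om P).
Proof.
move=> g; have gT := good_T2 g; case: g => hA hB pA pB; case: gT => tA tB _ _.
pose y : 'I_n -> 'I_m -> R := fun j i => P.1 (ri i) (cj j).
pose w : 'I_n -> 'I_m -> R := fun j i => Om i j.
have hy : forall j i, 0 <= y j i by case: hA => hnn _ _ _ _ j i; apply: hnn.
have hyw : forall j i, w j i <= 0 -> y j i = 0 by case: hA => _ _ _ hz _ j i; apply: hz.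
have FT : Fobj Om (T2 b Om P) =
    \sum_j \sum_i Num.sqrt (Ec b y w j i * y j i) * w j i.
  rewrite /Fobj exchange_big /=; apply: eq_bigr => j _; apply: eq_bigr => i _.
  by rewrite T2_in; congr (Num.sqrt _ * _); rewrite mulrC.
have FQ : forall Q : mxpair R m n, Q.1 = P.1 -> Fobj Om Q =
    \sum_j \sum_i Num.sqrt (Q.2 (ri i) (cj j) * y j i) * w j i.
  move=> Q hQ1; rewrite /Fobj hQ1 exchange_big /=; apply: eq_bigr => j _; apply: eq_bigr => i _.
  by congr (Num.sqrt _ * _); rewrite mulrC.
have hsumQ : forall Q : mxpair R m n, okB Q.2 -> forall j,
    \sum_i Q.2 (ri i) (cj j) = \sum_i Ec b y w j i.
  by move=> Q qB j; rewrite (okB_colsum qB tB); apply: eq_bigr => i _; rewrite T2_in.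
split.
- by split => //; apply/inAt_ok.
- move=> Q [hQ hQ1]; have [_ qB] := (inAt_ok Q).1 hQ.
  rewrite FT FQ //.
  apply: (core_le hb hy hyw (x := fun j i => Q.2 (ri i) (cj j))).
    by case: qB => hnn _ _ _ _ j i; apply: hnn.
  exact: hsumQ.
- move=> Q [hQ hQ1] hle; have [_ qB] := (inAt_ok Q).1 hQ.
  rewrite FT FQ // in hle.
  have hx := core_eq hb hy hyw (x := fun j i => Q.2 (ri i) (cj j))
    (ltac:(by case: qB => hnn _ _ _ _ j i; apply: hnn)) (hsumQ Q qB) hle.
  have hQ2 : Q.2 = (T2 b Om P).2.
    apply/matrixP => i j.
    case: (unliftP ord0 j) => [j'|] ->; last first.
      by rewrite T2_bd1; case: qB => _ _ -> _ _; case: hB => _ _ -> _ _.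
    case: (unliftP ord0 i) => [i'|] ->; first by rewrite T2_in; apply: hx.
    by rewrite T2_bd0 (okB_bd qB) (okB_bd hB).
  by case: Q hQ hQ1 hle hx qB hQ2 => Q1 Q2 /= _ -> _ _ _ ->.
Qed.

End Main.

Theorem lemma2p16 (R : rcfType) (m n : nat) (hm : (0 < m)%N) (hn : (0 < n)%N)
    (a : 'I_m -> R) (b : 'I_n -> R) (Om : 'M[R]_(m, n))
    (ha : forall i, 0 < a i) (hb : forall j, 0 < b j) :
  (forall P : mxpair R m n, relint (inAt a b Om) P ->
     relint (inAt a b Om) (T1 a Om P) /\ relint (inAt a b Om) (T2 b Om P)) /\
  (forall P : mxpair R m n, relint (inAt a b Om) P ->
     unique_argmax (fun Q => inAt a b Om Q /\ Q.2 = P.2) (Fobj Om) (T1 a Om P) /\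
     unique_argmax (fun Q => inAt a b Om Q /\ Q.1 = P.1) (Fobj Om) (T2 b Om P)).
Proof.
split=> P hP; have g := relint_good ha hb hP.
  by split; apply: (good_relint ha hb); [apply: (good_T1 ha) | apply: (good_T2 hb)].
by split; [apply: (argmax1 ha) | apply: (argmax2 hb)].
Qed.
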